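(* Let $\mu$ be a log-concave probability measure on $\mathbb R^n$, let $\psi$ be a convex function on $\mathbb R^n$ (with $\psi\in L_1(\mu)$) and let $m$ be a median of $\psi$ with respect to $\mu$. Then $$\mu\Big(\Big\{x:\psi(x)<m-t\int|\psi-m|\,d\mu\Big\}\Big)\leqslant\frac12\exp(-t/16)$$ for all $t>0$. *)

(* Defs.v *)
From HB Require Import structures.
From mathcomp Require Import all_boot all_order all_algebra.
From mathcomp Require Import all_classical all_reals all_analysis.
Set Implicit Arguments. Unset Strict Implicit. Unset Printing Implicit Defensive.
Import Order.TTheory GRing.Theory Num.Theory.
Import numFieldNormedType.Exports.
Local Open Scope classical_set_scope.
Local Open Scope ring_scope.

(* R^n as row vectors with the usual (product) topology, equipped with the
   Borel sigma-algebra (generated by the open sets). *)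
Definition Rn (R : realType) (n : nat) : Type :=
  g_sigma_algebraType (@open 'rV[R]_n).

HB.instance Definition _ (R : realType) (n : nat) :=
  Measurable.on (Rn R n).

Definition mink_comb (R : realType) (n : nat) (l : R) (A B : set 'rV[R]_n)
  : set 'rV[R]_n :=
  [set l *: a + (1 - l) *: b | a in A & b in B].

(* Borell's definition of a log-concave measure: for all compact A, B and
   0 < l < 1,  mu(l A + (1-l) B) >= mu(A)^l mu(B)^(1-l). *)
Definition log_concave (R : realType) (n : nat)
  (mu : probability (Rn R n) R) : Prop :=
  forall (l : R) (A B : set 'rV[R]_n), 0 < l < 1 ->
    compact A -> compact B ->
    (fine (mu A)) `^ l * (fine (mu B)) `^ (1 - l)
      <= fine (mu (mink_comb l A B)).

Definition convex_fun (R : realType) (n : nat) (psi : 'rV[R]_n -> R) : Prop :=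
  forall (x y : 'rV[R]_n) (l : R), 0 <= l <= 1 ->
    psi (l *: x + (1 - l) *: y) <= l * psi x + (1 - l) * psi y.

Definition is_median (R : realType) (n : nat) (mu : probability (Rn R n) R)
  (psi : 'rV[R]_n -> R) (m : R) : Prop :=
  ((1 / 2)%:E <= mu [set x | (psi x <= m)%R])%E /\
  ((1 / 2)%:E <= mu [set x | (m <= psi x)%R])%E.

(* Main.v *)
Require Import Defs.
From HB Require Import structures.
From mathcomp Require Import all_boot all_order all_algebra.
From mathcomp Require Import all_classical all_reals all_analysis.
Import Order.TTheory GRing.Theory Num.Theory.
Import numFieldNormedType.Exports.
Local Open Scope classical_set_scope.
Local Open Scope ring_scope.
From mathcomp Require Import ring lra.


Lemma conv2 (R : realType) (n : nat) (psi : 'rV[R]_n -> R) (a b : R) (x y : 'rV[R]_n) :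
  convex_fun psi -> 0 <= a -> 0 <= b -> a + b = 1 ->
  psi (a *: x + b *: y) <= a * psi x + b * psi y.
Proof.
move=> cv a0 b0 ab; have -> : b = 1 - a by rewrite -ab addrAC subrr add0r.
apply: cv; rewrite a0 /=; lra.
Qed.

Lemma jensen_avg (R : realType) (n : nat) (psi : 'rV[R]_n -> R) :
  convex_fun psi -> forall k (y : 'I_k.+1 -> 'rV[R]_n),
  psi ((k.+1%:R)^-1 *: \sum_i y i) <= (k.+1%:R)^-1 * \sum_i psi (y i).
Proof.
move=> cv; elim=> [|k IH] y.
  by rewrite !big_ord1 invr1 scale1r mul1r.
rewrite big_ord_recr [X in _ <= _ * X]big_ord_recr /=.
set S := \sum_(i < k.+1) y (widen_ord _ i).
set T := \sum_(i < k.+1) psi (y (widen_ord _ i)).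
have k1 : 0 < k.+1%:R :> R by rewrite ltr0n.
have k2 : 0 < k.+2%:R :> R by rewrite ltr0n.
have -> : (k.+2%:R)^-1 *: (S + y ord_max) =
   (k.+1%:R / k.+2%:R) *: ((k.+1%:R)^-1 *: S) + (k.+2%:R)^-1 *: y ord_max.
  rewrite scalerDr scalerA; congr (_ *: _ + _).
  by rewrite mulrAC mulrV ?mul1r // unitfE gt_eqF.
apply: le_trans (conv2 _ _ _ _ _ _ _ cv _ _ _) _.
- by rewrite divr_ge0 // ltW.
- by rewrite invr_ge0 ltW.
- by rewrite -[X in _ + X]mul1r -mulrDl natr1 mulrV // unitfE gt_eqF.
rewrite mulrDr lerD2r; apply: le_trans (ler_wpM2l _ (IH _)) _.
  by rewrite divr_ge0 // ltW.
rewrite -/T le_eqVlt; apply/orP; left; apply/eqP; field; rewrite ?gt_eqF //.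
Qed.

Lemma seg_bound (R : realType) (n : nat) (psi : 'rV[R]_n -> R) x v (a : R) :
  convex_fun psi -> `|a| <= 1 ->
  psi (x + a *: v) <= Num.max (psi (x + v)) (psi (x - v)).
Proof.
move=> cv; rewrite ler_norml => /andP[a1 a2].
have -> : x + a *: v = ((1 + a) / 2) *: (x + v) + ((1 - a) / 2) *: (x - v).
  rewrite !scalerDr !scalerN addrACA -scalerDl -scalerBl.
  have -> : (1 + a) / 2 + (1 - a) / 2 = 1 :> R by field.
  have -> : (1 + a) / 2 - (1 - a) / 2 = a :> R by field.
  by rewrite scale1r.
apply: le_trans (conv2 _ _ _ _ _ _ _ cv _ _ _) _.
- lra. - lra. - by field. all: try done.
have h1 : psi (x + v) <= Num.max (psi (x + v)) (psi (x - v)) by rewrite le_max lexx.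
have h2 : psi (x - v) <= Num.max (psi (x + v)) (psi (x - v)) by rewrite le_max lexx orbT.
have p1 : 0 <= (1 + a) / 2 by lra.
have p2 : 0 <= (1 - a) / 2 by lra.
move: h1 h2; set M := Num.max _ _; set p := psi _; set q := psi _ => h1 h2.
nra.
Qed.


Lemma box_bound (R : realType) (n : nat) (psi : 'rV[R]_n -> R) :
  convex_fun psi -> forall (x : 'rV[R]_n) (d : R), 0 < d ->
  exists M, forall h : 'rV[R]_n, (forall j, `|h ord0 j| <= d) -> psi (x + h) <= M.
Proof.
case: n psi => [|k] psi cv x d d0.
  by exists (psi x) => h _; rewrite [h]thinmx0 addr0.
set N : R := k.+1%:R.
have N0 : 0 < N by rewrite ltr0n.
pose e (i : 'I_k.+1) : 'rV[R]_k.+1 := delta_mx 0 i.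
pose F i := `|psi (x + (N * d) *: e i)| + `|psi (x - (N * d) *: e i)|.
exists (\sum_i F i) => h hd.
have Fge0 i : 0 <= F i by rewrite addr_ge0.
have FleM j : F j <= \sum_i F i.
  rewrite (bigD1 j) //= lerDl; exact: sumr_ge0.
have -> : x + h = N^-1 *: \sum_i (x + (N * h 0 i) *: e i).
  rewrite big_split /= sumr_const card_ord -scaler_nat scalerDr scalerA.
  rewrite mulVf ?gt_eqF // scale1r scaler_sumr; congr (_ + _).
  rewrite [LHS]row_sum_delta; apply: eq_bigr => i _.
  by rewrite scalerA mulrA mulVf ?gt_eqF // mul1r.
apply: le_trans (@jensen_avg _ _ psi cv k _) _.
rewrite -/N; apply: le_trans (_ : N^-1 * \sum_(i < k.+1) \sum_i F i <= _).
  apply: ler_wpM2l; first by rewrite invr_ge0 ltW.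
  apply: ler_sum => i _.
  have -> : (N * h 0 i) *: e i = (h 0 i / d) *: ((N * d) *: e i).
    by rewrite scalerA; congr (_ *: _); field; rewrite gt_eqF.
  apply: le_trans (@seg_bound _ _ psi _ _ _ cv _) _.
    by rewrite normrM normfV (gtr0_norm d0) ler_pdivrMr // mul1r.
  apply: le_trans (FleM i); rewrite ge_max /F; apply/andP; split.
    by apply: le_trans (ler_norm _) _; rewrite lerDl.
  by apply: le_trans (ler_norm _) _; rewrite lerDr.
by rewrite sumr_const card_ord -mulr_natr mulrCA mulVf ?gt_eqF // mulr1.
Qed.


Lemma convex_continuous (R : realType) (n : nat) (psi : 'rV[R]_n -> R) :
  convex_fun psi -> continuous psi.
Proof.
move=> cv x; have [M hM] := @box_bound _ _ psi cv x 1 ltr01.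
have Mx : psi x <= M by rewrite -[x]addr0; apply: hM => j; rewrite mxE normr0.
apply/(@cvgrPdist_lt _ _ _ (nbhs x) (nbhs_filter x)) => eps eps0.
set D := M - psi x.
have D0 : 0 <= D by rewrite subr_ge0.
set th := Num.min 1 (eps / (D + 1)).
have th0 : 0 < th by rewrite lt_min ltr01 divr_gt0 // ltr_wpDl.
have th1 : th <= 1 by rewrite ge_min lexx.
have thD : th * D < eps.
  have : th <= eps / (D + 1) by rewrite ge_min lexx orbT.
  rewrite ler_pdivlMr ?ltr_wpDl // => h.
  apply: le_lt_trans (_ : th * (D + 1) - th < _); first lra.
  lra.
apply/nbhs_ballP; exists th => // y [_ bxy].
set g := th^-1 *: (y - x).
have hg : forall j, `|g ord0 j| <= 1.
  move=> j; rewrite /g !mxE normrM normfV (gtr0_norm th0) ler_pdivrMl // mulr1.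
  by apply: ltW; rewrite distrC; exact: (bxy ord0 j).
have hg' : forall j, `|(- g) ord0 j| <= 1 by move=> j; rewrite mxE normrN.
have up : psi y <= (1 - th) * psi x + th * M.
  have -> : y = (1 - th) *: x + th *: (x + g).
    rewrite /g scalerDr scalerA mulfV ?gt_eqF // scale1r scalerBl scale1r.
    by rewrite addrA subrK addrC subrK.
  apply: le_trans (conv2 _ _ _ _ _ _ _ cv _ _ _) _.
  - lra. - lra. - lra.
  rewrite lerD2l; apply: ler_wpM2l; [exact: ltW | exact: hM].
have th1' : 0 < 1 + th by lra.
have lo : psi x <= (1 + th)^-1 * psi y + (th / (1 + th)) * M.
  have -> : x = (1 + th)^-1 *: y + (th / (1 + th)) *: (x + - g).
    apply/rowP => j; rewrite /g !mxE; field.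
    by rewrite !gt_eqF.
  apply: le_trans (conv2 _ _ _ _ _ _ _ cv _ _ _) _.
  - by rewrite invr_ge0 ltW.
  - by apply: divr_ge0; apply: ltW.
  - by rewrite -[X in X + _]mul1r -mulrDl mulfV // gt_eqF.
  rewrite lerD2l; apply: ler_wpM2l; [by apply: divr_ge0; apply: ltW | exact: hM].
have lo' : psi x * (1 + th) <= psi y + th * M.
  rewrite -ler_pdivlMr //.
  suff -> : (psi y + th * M) / (1 + th) = (1 + th)^-1 * psi y + th / (1 + th) * M by [].
  by field; rewrite gt_eqF.
have thD2 : th * (M - psi x) < eps by [].
have a1 : psi x - psi y < eps by nra.
have a2 : psi y - psi x < eps by nra.
have : `|psi x - psi y| < eps :> R by rewrite ltr_norml a1 andbT; lra.
by [].
Qed.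


Lemma open_meas (R : realType) (n : nat) (A : set 'rV[R]_n) :
  open A -> measurable (A : set (Rn R n)).
Proof. by move=> oA; apply: sub_sigma_algebra. Qed.

Lemma closed_meas (R : realType) (n : nat) (A : set 'rV[R]_n) :
  closed A -> measurable (A : set (Rn R n)).
Proof.
move=> cA; rewrite -[A]setCK; apply: measurableC; apply: open_meas.
exact: closed_openC.
Qed.

Lemma mu_fin (R : realType) (n : nat) (mu : probability (Rn R n) R) (E : set (Rn R n)) :
  measurable E -> (mu E \is a fin_num)%E.
Proof.
move=> mE; rewrite ge0_fin_numE ?measure_ge0 //.
by apply: (le_lt_trans (probability_le1 mu mE)); rewrite ltry.
Qed.
Arguments mu_fin {R n mu E}.

Lemma markov_lem (R : realType) (n : nat) (mu : probability (Rn R n) R)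
  (psi : 'rV[R]_n -> R) (m : R) (E : set (Rn R n)) (r : R) :
  mu.-integrable [set: Rn R n] (fun x => (psi x)%:E) -> measurable E -> 0 < r ->
  (forall x, E x -> r <= `|psi x - m|) ->
  r * fine (mu E) <= Rintegral mu [set: Rn R n] (fun x => `|psi x - m|).
Proof.
move=> ip mE r0 hE.
have ipm : mu.-integrable [set: Rn R n] (fun x => (`|psi x - m|)%:E).
  have := integrable_abse (integrableB measurableT ip
    (finite_measure_integrable_cst mu m measurableT)).
  by apply: (eq_integrable measurableT) => x _ /=.
have mpm := measurable_int mu ipm.
have fE := mu_fin mE.
have -> : r * fine (mu E) = fine (r%:E * mu E)%E by rewrite fineM.
rewrite /Rintegral; apply: fine_le; first by rewrite fin_numM.
  exact: integrable_fin_num.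
rewrite -integral_cst //.
apply: (@le_trans _ _ (\int[mu]_(x in E) (`|psi x - m|)%:E)%E).
  apply: ge0_le_integral => //.
  - by move=> x _; rewrite lee_fin ltW.
  - exact: measurable_funS mpm.
apply: ge0_subset_integral => //.
Qed.


Definition box (R : realType) (n : nat) (k : nat) : set 'rV[R]_n :=
  [set v | forall i, `[- k%:R, k%:R]%classic (v ord0 i)].

Lemma box_compact (R : realType) (n : nat) k : compact (box R n k).
Proof.
have := @rV_compact R n (fun=> `[- k%:R, k%:R]%classic) (fun=> @segment_compact R _ _).
by [].
Qed.

Lemma box_closed (R : realType) (n : nat) k : closed (box R n k).
Proof. apply: compact_closed => //; exact: box_compact. Qed.

Lemma box_incr (R : realType) (n : nat) : nondecreasing_seq (box R n).
Proof.
move=> k l kl; apply/subsetPset => v /= hv i; have := hv i; rewrite /= !in_itv /= => /andP[h1 h2].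
have kl' : k%:R <= l%:R :> R by rewrite ler_nat.
by apply/andP; split; lra.
Qed.

Lemma box_cover (R : realType) (n : nat) (v : 'rV[R]_n) :
  exists k, box R n k v.
Proof.
exists (Num.Def.archi_bound (\sum_i `|v ord0 i|)) => i /=.
have h : \sum_i `|v ord0 i| < (Num.Def.archi_bound (\sum_i `|v ord0 i|))%:R.
  by apply: archi_boundP; apply: sumr_ge0.
have hi : `|v ord0 i| <= \sum_i `|v ord0 i|.
  by rewrite (bigD1 i) //= lerDl; apply: sumr_ge0.
move: (ltW (le_lt_trans hi h)); rewrite ler_norml => /andP[h1 h2].
by rewrite in_itv /= h1 h2.
Qed.

Lemma ev_gt (R : realType) (u : nat -> \bar R) (l a : \bar R) :
  u @ \oo --> l -> (a < l)%E -> \forall k \near \oo, (a < u k)%E.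
Proof.
move=> ul al; apply: (ul [set y | (a < y)%E]); apply: open_nbhs_nbhs; split => //.
exact: open_ereal_gt_ereal.
Qed.

Lemma inner_approx (R : realType) (n : nat) (mu : probability (Rn R n) R)
  (A : set 'rV[R]_n) (a : \bar R) : closed A -> (a < mu A)%E ->
  \forall k \near \oo, (a < mu (A `&` box R n k : set (Rn R n)))%E.
Proof.
move=> cA aA; apply: ev_gt aA.
have hU : \bigcup_k (A `&` box R n k) = (A : set (Rn R n)).
  apply/seteqP; split => [v [k _ []//]|v Av].
  by have [k hk] := @box_cover R n v; exists k.
have mF : forall k, measurable (A `&` box R n k : set (Rn R n)).
  move=> k; apply: closed_meas; apply: closedI => //; exact: box_closed.
have := @nondecreasing_cvg_mu _ _ _ mu (fun k => A `&` box R n k) mF.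
rewrite hU; apply; first exact: closed_meas.
by move=> k l kl; apply/subsetPset; apply: setIS; apply/subsetPset; exact: box_incr.
Qed.


Lemma mink_compact (R : realType) (n : nat) (l : R) (K L : set 'rV[R]_n) :
  compact K -> compact L -> compact (mink_comb l K L).
Proof.
move=> cK cL.
have -> : mink_comb l K L =
    (fun p : 'rV[R]_n * 'rV[R]_n => l *: p.1 + (1 - l) *: p.2) @` (K `*` L).
  apply/seteqP; split => [_ [a Ka [b Kb <-]]|_ [[a b] [/= Ka Kb] <-]].
    by exists (a, b).
  by exists a => //; exists b.
apply: continuous_compact; last exact: compact_setX.
apply: continuous_subspaceT => p.
apply: cvgD.
  apply: cvgZl_tmp; exact: cvg_fst.
apply: cvgZl_tmp; exact: cvg_snd.
Qed.

Lemma mink_meas (R : realType) (n : nat) (l : R) (K L : set 'rV[R]_n) :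
  compact K -> compact L -> measurable (mink_comb l K L : set (Rn R n)).
Proof.
move=> cK cL; apply: closed_meas; apply: compact_closed => //.
exact: mink_compact.
Qed.


Lemma numeric (R : realType) (t x y : R) : 0 < t ->
  1 / 2 * expR (- t / 16) < x -> 7 / 10 < y ->
  x `^ (9 / (2 * t + 9)) * y `^ (1 - 9 / (2 * t + 9)) <= 1 / 2 -> False.
Proof.
move=> t0 hx hy hP.
set lam := 9 / (2 * t + 9).
have D0 : 0 < 2 * t + 9 by lra.
have lam0 : 0 < lam by rewrite divr_gt0 //; lra.
have lam1 : 0 < 1 - lam.
  rewrite subr_gt0 /lam ltr_pdivrMr //; lra.
have a0 : 0 < 1 / 2 * expR (- t / 16) by rewrite mulr_gt0 ?expR_gt0 //; lra.
have x0 : 0 < x := lt_trans a0 hx.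
have y0 : 0 < y by lra.
have P0 : 0 < x `^ lam * y `^ (1 - lam) by rewrite mulr_gt0 // powR_gt0.
have h2 : (0 : R) < 1 / 2 by lra.
have := hP; rewrite -/lam -ler_ln ?posrE //.
rewrite lnM ?posrE ?powR_gt0 // !ln_powR.
have lnx : ln (1 / 2 * expR (- t / 16)) < ln x by rewrite ltr_ln ?posrE.
have lny : ln (7 / 10) < ln y by rewrite ltr_ln ?posrE //; lra.
rewrite lnM ?posrE ?expR_gt0 // expRK in lnx.
have L2 : ln (1 / 2 : R) = - ln 2 by rewrite div1r lnV ?posrE.
have L7 : - ln 2 + 2 / 7 <= ln (7 / 10 : R).
  have -> : (7 / 10 : R) = (1 / 2) * (5 / 7)^-1 by field.
  rewrite lnM ?posrE ?invr_gt0 //.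
  rewrite L2 lnV ?posrE //.
  have -> : (5 / 7 : R) = 1 + (- (2 / 7)) by field.
  have := @le_ln1Dx R (- (2 / 7)); lra.
rewrite L2 in lnx.
have k1 : lam * (- ln 2 - t / 16) < lam * ln x.
  by rewrite ltr_pM2l //; move: lnx; rewrite mulNr.
have k2 : (1 - lam) * (- ln 2 + 2 / 7) < (1 - lam) * ln y.
  by rewrite ltr_pM2l //; lra.
have k3 : - lam * t / 16 + (1 - lam) * (2 / 7) = t / (112 * (2 * t + 9)).
  by rewrite /lam; field; lra.
have k4 : 0 < t / (112 * (2 * t + 9)) by rewrite divr_gt0 // mulr_gt0.
rewrite L2 => k5.
have : lam * (- ln 2 - t / 16) + (1 - lam) * (- ln 2 + 2 / 7) < - ln 2 by lra.
suff : lam * (- ln 2 - t / 16) + (1 - lam) * (- ln 2 + 2 / 7) = - ln 2 + t / (112 * (2 * t + 9)).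
  move=> ->; lra.
rewrite -k3; ring.
Qed.

Arguments closed_meas {R n A}. Arguments open_meas {R n A}.

Lemma closed_sub (R : realType) (n : nat) (psi : 'rV[R]_n -> R) (c : R) :
  continuous psi -> closed [set x | psi x <= c].
Proof.
move=> cp; have -> : [set x | psi x <= c] = psi @^-1` [set y | y <= c] by [].
by apply: closed_comp => [x _|]; [exact: cp | exact: closed_le].
Qed.
Arguments closed_sub {R n psi c}.

Lemma closed_sup (R : realType) (n : nat) (psi : 'rV[R]_n -> R) (c : R) :
  continuous psi -> closed [set x | c <= psi x].
Proof.
move=> cp; have -> : [set x | c <= psi x] = psi @^-1` [set y | c <= y] by [].
by apply: closed_comp => [x _|]; [exact: cp | exact: closed_ge].
Qed.
Arguments closed_sup {R n psi c}.

Lemma open_sub (R : realType) (n : nat) (psi : 'rV[R]_n -> R) (c : R) :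
  continuous psi -> open [set x | psi x < c].
Proof.
move=> cp; have -> : [set x | psi x < c] = psi @^-1` [set y | y < c] by [].
by apply: open_comp => [x _|]; [exact: cp | exact: open_lt].
Qed.
Arguments open_sub {R n psi c}.

Lemma open_sup (R : realType) (n : nat) (psi : 'rV[R]_n -> R) (c : R) :
  continuous psi -> open [set x | c < psi x].
Proof.
move=> cp; have -> : [set x | c < psi x] = psi @^-1` [set y | c < y] by [].
by apply: open_comp => [x _|]; [exact: cp | exact: open_gt].
Qed.
Arguments open_sup {R n psi c}.

Lemma zero_case (R : realType) (n : nat) (mu : probability (Rn R n) R)
  (psi : 'rV[R]_n -> R) (m : R) :
  mu.-integrable [set: Rn R n] (fun x => (psi x)%:E) -> continuous psi ->
  Rintegral mu [set: Rn R n] (fun x => `|psi x - m|) = 0 ->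
  mu [set x | psi x < m] = 0%E.
Proof.
move=> ip cp I0.
apply/eqP; rewrite eq_le measure_ge0 andbT leNgt; apply/negP => hS.
pose E k : set 'rV[R]_n := [set x | psi x <= m - (k.+1%:R)^-1].
have mE k : measurable (E k : set (Rn R n)) := closed_meas (closed_sub cp).
have hU : \bigcup_k E k = [set x | psi x < m].
  apply/seteqP; split => [x [k _ /= hk]|x /= hx].
    by apply: (le_lt_trans hk); rewrite gtrBl invr_gt0 ltr0n.
  have d0 : 0 < m - psi x by rewrite subr_gt0.
  exists (Num.Def.archi_bound (m - psi x)^-1) => //=.
  set k := Num.Def.archi_bound _.
  have hk : (m - psi x)^-1 < k.+1%:R.
    apply: (lt_le_trans (archi_boundP _)); first by rewrite invr_ge0 ltW.
    by rewrite ler_nat.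
  have : (k.+1%:R)^-1 < m - psi x.
    by rewrite -[X in _ < X]invrK ltf_pV2 ?posrE ?invr_gt0 ?ltr0n.
  move=> h; rewrite /E /=.
  set r := k.+1%:R^-1 in h *; lra.
have nd : nondecreasing_seq (fun k => E k : set (Rn R n)).
  move=> k l kl; apply/subsetPset => x /= hx; apply: (le_trans hx).
  rewrite lerD2l lerN2 lef_pV2 ?posrE ?ltr0n // ler_nat; exact: kl.
have := @nondecreasing_cvg_mu _ _ _ mu (fun k => E k : set (Rn R n)) mE.
rewrite hU => /(_ (open_meas (open_sub cp)) nd) cv.
have [k hk] := filter_ex (@ev_gt R _ _ _ cv hS).
have r0 : 0 < (k.+1%:R : R)^-1 by rewrite invr_gt0 ltr0n.
have := @markov_lem R n mu psi m (E k) _ ip (mE k) r0.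
rewrite I0 => /(_ _) h.
have f0 : 0 < fine (mu (E k : set (Rn R n))).
  apply: fine_gt0; rewrite hk /=.
  by apply: (le_lt_trans (probability_le1 mu (mE k))); rewrite ltry.
suff : 0 < (k.+1%:R : R)^-1 * fine (mu (E k : set (Rn R n))).
  rewrite ltNge h // => x /= hx; rewrite ler_normr; apply/orP; right.
  move: hx; rewrite /E /=; set r := k.+1%:R^-1; lra.
exact: mulr_gt0.
Qed.

Arguments closed_meas {R n A}. Arguments open_meas {R n A}.
Arguments mink_meas {R n l K L}.

Theorem theorem5p6 (R : realType) (n : nat) (mu : probability (Rn R n) R)
  (psi : 'rV[R]_n -> R) (m : R) :
  log_concave mu -> convex_fun psi ->
  mu.-integrable [set: Rn R n] (fun x => (psi x)%:E) ->
  is_median mu psi m ->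
  forall t : R, 0 < t ->
    (mu [set x | (psi x < m - t * Rintegral mu [set: Rn R n] (fun x => `|psi x - m|))%R]
      <= (1 / 2 * expR (- t / 16))%:E)%E.
Proof.
move=> lc cv ip [med1 med2] t t0.
have cp := @convex_continuous _ _ psi cv.
set I := Rintegral mu [set: Rn R n] (fun x => `|psi x - m|).
have I0 : 0 <= I by rewrite /I /Rintegral fine_ge0 // integral_ge0.
have a00 : 0 < 1 / 2 * expR (- t / 16) by rewrite mulr_gt0 ?expR_gt0 ?divr_gt0.
move: I0; rewrite le_eqVlt => /orP[/eqP I00|Ipos].
  rewrite -I00 mulr0 subr0 (@zero_case R n mu psi m ip cp (esym I00)) lee_fin; exact: ltW.
set a0 := 1 / 2 * expR (- t / 16) in a00 *.
rewrite leNgt; apply/negP => hT.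
pose A : set 'rV[R]_n := [set x | psi x <= m - t * I].
pose B : set 'rV[R]_n := [set x | psi x <= m + 4 * I].
have hA : (a0%:E < mu (A : set (Rn R n)))%E.
  apply: (lt_le_trans hT); apply: le_measure; rewrite ?inE.
  - exact: open_meas (open_sub cp).
  - exact: closed_meas (closed_sub cp).
  - by move=> x /= /ltW.
pose C : set 'rV[R]_n := [set x | m + 4 * I < psi x].
have mC : measurable (C : set (Rn R n)) := open_meas (open_sup cp).
have I4 : 0 < 4 * I by rewrite mulr_gt0.
have hC := @markov_lem R n mu psi m C (4 * I) ip mC I4.
have fC : fine (mu (C : set (Rn R n))) <= 1 / 4.
  have : 4 * I * fine (mu (C : set (Rn R n))) <= I.
    apply: hC => x; rewrite /C /= => hx; rewrite ler_normr; apply/orP; left; lra.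
  set f := fine _ => h; nra.
have hB : ((7 / 10)%:E < mu (B : set (Rn R n)))%E.
  have -> : (B : set (Rn R n)) = ~` C.
    apply/seteqP; split => x; rewrite /B /C /= leNgt; [by move/negP | by move=> /negP].
  rewrite probability_setC // -(fineK (mu_fin mC)) -EFinB lte_fin; lra.
have [k [hk1 hk2]] := filter_ex (filterI
  (@inner_approx R n mu A _ (closed_sub cp) hA)
  (@inner_approx R n mu B _ (closed_sub cp) hB)).
set K := A `&` box R n k in hk1; set L := B `&` box R n k in hk2.
have cK : compact K by rewrite /K setIC; exact: compact_closedI (box_compact _ _ _) (closed_sub cp).
have cL : compact L by rewrite /L setIC; exact: compact_closedI (box_compact _ _ _) (closed_sub cp).
have mK : measurable (K : set (Rn R n)) := closed_meas (compact_closed (@norm_hausdorff _ _) cK).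
have mL : measurable (L : set (Rn R n)) := closed_meas (compact_closed (@norm_hausdorff _ _) cL).
set lam := 9 / (2 * t + 9).
have D0 : 0 < 2 * t + 9 by lra.
have lam0 : 0 < lam by rewrite divr_gt0 //; lra.
have lam1 : 0 < 1 - lam by rewrite subr_gt0 /lam ltr_pdivrMr //; lra.
have lam01 : 0 < lam < 1 by rewrite lam0 /=; lra.
have hlc := lc lam K L lam01 cK cL.
pose S : set 'rV[R]_n := [set x | psi x < m].
have mS : measurable (S : set (Rn R n)) := open_meas (open_sub cp).
have sub : mink_comb lam K L `<=` S.
  move=> _ [a [Aa _] [b [Bb _] <-]]; rewrite /S /=.
  apply: (le_lt_trans (conv2 _ _ _ _ _ _ _ cv (ltW lam0) (ltW lam1) _)).
    by rewrite addrCA subrr addr0.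
  have e : lam * (m - t * I) + (1 - lam) * (m + 4 * I) = m - I * t / (2 * t + 9).
    by rewrite /lam; field; rewrite gt_eqF.
  have h1 := ler_wpM2l (ltW lam0) Aa.
  have h2 := ler_wpM2l (ltW lam1) Bb.
  have h3 : 0 < I * t / (2 * t + 9) by rewrite divr_gt0 // mulr_gt0.
  move: h1 h2; rewrite /A /B /=; lra.
pose Mm : set 'rV[R]_n := [set x | m <= psi x].
have mMm : measurable (Mm : set (Rn R n)) := closed_meas (closed_sup cp).
have hS : fine (mu (S : set (Rn R n))) <= 1 / 2.
  have -> : (S : set (Rn R n)) = ~` Mm.
    apply/seteqP; split => x; rewrite /S /Mm /= ltNge; [by move/negP | by move=> /negP].
  rewrite probability_setC // -(fineK (mu_fin mMm)) -EFinB /=.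
  move: med2; rewrite -(fineK (mu_fin mMm)) lee_fin; lra.
have hle : fine (mu (mink_comb lam K L : set (Rn R n))) <= fine (mu (S : set (Rn R n))).
  apply: fine_le; [exact: mu_fin (mink_meas cK cL) | exact: mu_fin mS |].
  by apply: le_measure; rewrite ?inE //; exact: mink_meas.
rewrite -(fineK (mu_fin mK)) lte_fin in hk1.
rewrite -(fineK (mu_fin mL)) lte_fin in hk2.
have := le_trans hlc (le_trans hle hS).
exact: (@numeric R t _ _ t0 hk1 hk2).
Qed.
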